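(* Let $q>0$, $q\neq1$, $\hbar,m>0$. Let $\psi:(\mathbb{R}\setminus\{0\})\times\mathbb{R}\to\mathbb{C}$ be differentiable in $t$, nowhere zero, and satisfy $\partial_t\psi=\frac{i\hbar}{2m}D_x^2\psi$. Define $u(x,t)=-\frac{i\hbar}{m}\frac{D_x\psi(x,t)}{\psi(x,t)}$. Then for all $x\ne0$ and $t$, $$i\hbar\,\partial_tu(x,t)+\frac{\hbar^2}{2m}D_x^2u(x,t)=\frac{i\hbar}{2}u(x,t)\big[(1-M_q^x)D_xu\big](x,t)-\frac{i\hbar}{2}D_x\big(u(qx,t)u(x,t)\big)+\frac m2\big[u(q^2x,t)-u(x,t)\big]u(qx,t)u(x,t).$$
   Context: $D_x$ is the $q$-derivative in $x$ at fixed $t$: $D_xf(x,t)=\frac{f(qx,t)-f(x,t)}{(q-1)x}$, $D_x^2=D_x\circ D_x$; $\partial_t$ is the ordinary time derivative. $M_q^x$ is the dilation operator $(M_q^xf)(x,t)=f(qx,t)$. *)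

(* Defs.v *)
From Stdlib Require Export Reals.
From Coquelicot Require Export Coquelicot.
Open Scope R_scope.

Definition Dq (q : R) (f : R -> R -> C) : R -> R -> C :=
  fun x t => ((f (q * x)%R t - f x t) / RtoC ((q - 1) * x))%C.

Definition Dq2 (q : R) (f : R -> R -> C) : R -> R -> C := Dq q (Dq q f).

Definition Mq (q : R) (f : R -> R -> C) : R -> R -> C := fun x t => f (q * x) t.

(* Main.v *)
Require Import Defs.
From Stdlib Require Import Lra Psatz.
Open Scope R_scope.

Lemma dC_fst (f : R -> C) t l : is_derive f t l -> is_derive (fun s => fst (f s)) t (fst l).
Proof.
  intros H. unfold is_derive in *.
  eapply filterdiff_ext_lin.
  - apply (filterdiff_comp f (fun p : C => fst p) _ (fun p : C => fst p) H).
    apply filterdiff_linear. apply (@is_linear_fst R_AbsRing R_NormedModule R_NormedModule).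
  - intros y. reflexivity.
Qed.

Lemma dC_snd (f : R -> C) t l : is_derive f t l -> is_derive (fun s => snd (f s)) t (snd l).
Proof.
  intros H. unfold is_derive in *.
  eapply filterdiff_ext_lin.
  - apply (filterdiff_comp f (fun p : C => snd p) _ (fun p : C => snd p) H).
    apply filterdiff_linear. apply (@is_linear_snd R_AbsRing R_NormedModule R_NormedModule).
  - intros y. reflexivity.
Qed.

Lemma dC_pair (a b : R -> R) t da db : is_derive a t da -> is_derive b t db ->
  is_derive (fun s => (a s, b s) : C) t ((da, db) : C).
Proof.
  intros Ha Hb.
  assert (H := is_derive_plus _ _ _ _ _ (@is_derive_scal_l R_AbsRing (prod_NormedModule R_AbsRing R_NormedModule R_NormedModule) a t da (1,0) Ha)
     (@is_derive_scal_l R_AbsRing (prod_NormedModule R_AbsRing R_NormedModule R_NormedModule) b t db (0,1) Hb)).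
  eapply is_derive_ext in H.
  2:{ intros s. simpl. unfold plus, scal; simpl. unfold prod_plus, prod_scal, plus, scal, mult; simpl.
      unfold mult; simpl. instantiate (1 := fun s => (a s, b s) : C). simpl. f_equal; ring. }
  replace ((da, db) : C) with (plus (scal da ((1,0):C)) (scal db ((0,1):C)) : prod_NormedModule R_AbsRing R_NormedModule R_NormedModule).
  exact H.
  unfold plus, scal; simpl. unfold prod_plus, prod_scal, plus, scal, mult; simpl.
  unfold mult; simpl. f_equal; ring.
Qed.

Lemma dC_eq (f : R -> C) t l l' : is_derive f t l -> l = l' -> is_derive f t l'.
Proof. intros H ->; exact H. Qed.

Lemma dC_mult (f g : R -> C) t df dg : is_derive f t df -> is_derive g t dg ->
  is_derive (fun s => (f s * g s)%C) t (df * g t + f t * dg)%C.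
Proof.
  intros Hf Hg.
  pose proof (dC_fst _ _ _ Hf) as F1. pose proof (dC_snd _ _ _ Hf) as F2.
  pose proof (dC_fst _ _ _ Hg) as G1. pose proof (dC_snd _ _ _ Hg) as G2.
  pose proof (is_derive_minus _ _ _ _ _ (Derive.is_derive_mult _ _ _ _ _ F1 G1) (Derive.is_derive_mult _ _ _ _ _ F2 G2)) as H1.
  pose proof (is_derive_plus _ _ _ _ _ (Derive.is_derive_mult _ _ _ _ _ F1 G2) (Derive.is_derive_mult _ _ _ _ _ F2 G1)) as H2.
  pose proof (dC_pair _ _ _ _ _ H1 H2) as P.
  eapply dC_eq.
  - eapply is_derive_ext; [| exact P]. intros s. simpl. unfold minus, plus, opp; simpl. reflexivity.
  - destruct df, dg. simpl. unfold minus, plus, opp; simpl. destruct (f t), (g t). simpl.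
    unfold Cplus, Cmult; simpl. f_equal; ring.
Qed.

Lemma dC_inv (f : R -> C) t df : is_derive f t df -> f t <> 0%C ->
  is_derive (fun s => (/ f s)%C) t (- df / (f t * f t))%C.
Proof.
  intros Hf Hnz.
  pose proof (dC_fst _ _ _ Hf) as F1. pose proof (dC_snd _ _ _ Hf) as F2.
  assert (Hn : (fst (f t) ^ 2 + snd (f t) ^ 2) <> 0).
  { intro E. apply Hnz. destruct (f t) as [a b]; simpl in *.
    assert (a = 0 /\ b = 0) as [-> ->] by nra. reflexivity. }
  pose proof (is_derive_plus _ _ _ _ _ (is_derive_pow _ 2 _ _ F1) (is_derive_pow _ 2 _ _ F2)) as N.
  pose proof (is_derive_inv _ _ _ N Hn) as IN.
  pose proof (Derive.is_derive_mult _ _ _ _ _ F1 IN) as H1.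
  pose proof (is_derive_opp _ _ _ (Derive.is_derive_mult _ _ _ _ _ F2 IN)) as H2.
  pose proof (dC_pair _ _ _ _ _ H1 H2) as P.
  eapply dC_eq.
  - eapply is_derive_ext; [| exact P]. intros s. simpl. unfold Cinv, plus, opp; simpl. f_equal. unfold Rdiv. rewrite Ropp_mult_distr_l. reflexivity.
  - destruct df as [d1 d2]. simpl. unfold minus, plus, opp, mult; simpl.
    destruct (f t) as [a b]; simpl in *. unfold Cdiv, Cinv, Cmult, Copp; simpl.
    f_equal; field; nra.
Qed.

Lemma dC_const (c : C) t : is_derive (fun _ : R => c) t (RtoC 0).
Proof. apply (@is_derive_const R_AbsRing (prod_NormedModule R_AbsRing R_NormedModule R_NormedModule)). Qed.

Lemma dC_minus (f g : R -> C) t df dg : is_derive f t df -> is_derive g t dg ->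
  is_derive (fun s => (f s - g s)%C) t (df - dg)%C.
Proof.
  intros Hf Hg. pose proof (is_derive_minus _ _ _ _ _ Hf Hg) as H. exact H.
Qed.

Lemma dC_cmul (c : C) (f : R -> C) t df : is_derive f t df ->
  is_derive (fun s => (c * f s)%C) t (c * df)%C.
Proof.
  intros Hf. eapply dC_eq. apply (dC_mult (fun _ => c) f t (RtoC 0) df (dC_const c t) Hf).
  apply (f_equal (fun z : C => z)); rewrite Cmult_0_l, Cplus_0_l; reflexivity.
Qed.

Lemma dC_mulc (c : C) (f : R -> C) t df : is_derive f t df ->
  is_derive (fun s => (f s * c)%C) t (df * c)%C.
Proof.
  intros Hf. eapply dC_eq. apply (dC_mult f (fun _ => c) t df (RtoC 0) Hf (dC_const c t)).
  rewrite Cmult_0_r, Cplus_0_r; reflexivity.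
Qed.

Lemma RtoC_neq (a : R) : a <> 0 -> RtoC a <> 0%C.
Proof. intros H E. apply H. injection E. auto. Qed.

Theorem mainTheorem14 (q hbar m : R) (psi : R -> R -> C) :
  0 < q -> q <> 1 -> 0 < hbar -> 0 < m ->
  (forall x t, x <> 0 -> psi x t <> RtoC 0) ->
  (forall x t, x <> 0 ->
     is_derive (fun s => psi x s) t
       (Ci * RtoC hbar / RtoC (2 * m) * Dq2 q psi x t)%C) ->
  let u : R -> R -> C :=
    fun x t => (- (Ci * RtoC hbar / RtoC m) * (Dq q psi x t / psi x t))%C in
  forall x t, x <> 0 ->
    exists dtu : C,
      is_derive (fun s => u x s) t dtu /\
      (Ci * RtoC hbar * dtu
       + RtoC (hbar ^ 2 / (2 * m)) * Dq2 q u x t)%C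
      = (Ci * RtoC hbar / 2 * u x t * (Dq q u x t - Mq q (Dq q u) x t)
         - Ci * RtoC hbar / 2 * Dq q (fun y s => u (q * y)%R s * u y s) x t
         + RtoC m / 2 * (u (q ^ 2 * x)%R t - u x t) * u (q * x)%R t * u x t)%C.
Proof.
  intros Hq Hq1 Hh Hm Hnz Hd u x t Hx.
  assert (Hqx : q * x <> 0) by (apply Rmult_integral_contrapositive; split; lra).
  assert (Hqqx : q * (q * x) <> 0) by (apply Rmult_integral_contrapositive; split; lra).
  assert (Hqqqx : q * (q * (q * x)) <> 0) by (apply Rmult_integral_contrapositive; split; lra).
  pose proof (dC_mulc (/ RtoC ((q - 1) * x))%C _ t _ (dC_minus _ _ t _ _ (Hd (q * x) t Hqx) (Hd x t Hx))) as HN.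
  pose proof (dC_mult _ _ t _ _ HN (dC_inv _ t _ (Hd x t Hx) (Hnz x t Hx))) as HQ.
  pose proof (dC_cmul (- (Ci * RtoC hbar / RtoC m))%C _ t _ HQ) as HU.
  eexists. split.
  { exact HU. }
  replace (q ^ 2 * x) with (q * (q * x)) by ring.
  pose proof (Hnz x t Hx). pose proof (Hnz _ t Hqx). pose proof (Hnz _ t Hqqx). pose proof (Hnz _ t Hqqqx).
  unfold u, Dq2, Dq, Mq.
  replace (hbar ^ 2) with (hbar * hbar) by ring.
  rewrite (RtoC_div (hbar * hbar) (2 * m) ltac:(lra)).
  rewrite !RtoC_mult, !RtoC_minus.
  assert (Hq0 : RtoC q <> 0%C) by (apply RtoC_neq; lra).
  assert (Hq10 : (RtoC q - RtoC 1)%C <> 0%C) by (rewrite <- RtoC_minus; apply RtoC_neq; lra).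
  assert (Hx0 : RtoC x <> 0%C) by (apply RtoC_neq; lra).
  assert (Hm0 : RtoC m <> 0%C) by (apply RtoC_neq; lra).
  assert (H20 : RtoC 2 <> 0%C) by (apply RtoC_neq; lra).
  assert (Hi : (Ci * Ci = - (1))%C) by (unfold Ci, Cmult, Copp; simpl; f_equal; ring).
  cbv beta. field [Hi].
  repeat split; auto.
Qed.
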